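(* Let $k\ge2$, $n$ be integers, $c\ge0$, and let numbers $b_{\ell,r}$, for $k<\ell\le n+1$ and $r\in\{0,\dots,k\}$, satisfy $b_{n+1,r}=0$, $b_{\ell,0}=0$, and for $k<\ell\le n$, $r\ge1$: $$b_{\ell,r}=\sum_{j=\ell}^{n}\left(\frac{\ell-k}{j-k}\right)^k\left(\frac{k-1}{j+1}\,b_{j+1,r-1}+\frac{c}{n}\right).$$ Then for all $\ell$ with $k^2+k\le\ell\le n$ and all $r\in\{0,\dots,k\}$, $$b_{\ell,r}\ \ge\ \left(\frac{r(\ell-k)}{(k-1)n}-\frac{1}{k-1}\left(\frac{\ell-k}{n-k}\right)^k\sum_{r'=0}^{r-1}\sum_{i=0}^{r'}\frac{(k-1)^i}{i!}\ln^i\!\left(\frac{n}{\ell}\right)-\frac{3k^2r}{(k-1)n}\right)c.$$ *)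

(* Defs.v *)
From Stdlib Require Import Reals List Arith.
Open Scope R_scope.

(* sum_{j=a}^{b} f j  (empty when b < a) *)
Definition sum_ft (a b : nat) (f : nat -> R) : R :=
  fold_right Rplus 0 (map f (seq a (S b - a))).

Definition sum_lt (m : nat) (f : nat -> R) : R :=
  fold_right Rplus 0 (map f (seq 0 m)).

(* Main.v *)
Require Import Defs.
From Stdlib Require Import Reals List Arith Lra Lia.
Open Scope R_scope.

Definition sr (a m : nat) (f : nat -> R) : R := fold_right Rplus 0 (map f (seq a m)).

Lemma sr_0 a f : sr a 0 f = 0. Proof. reflexivity. Qed.
Lemma sr_Sl a m f : sr a (S m) f = f a + sr (S a) m f. Proof. reflexivity. Qed.
Lemma sr_Sr a m f : sr a (S m) f = sr a m f + f (a + m)%nat.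
Proof.
  revert a; induction m; intro a.
  - unfold sr; simpl. rewrite Nat.add_0_r. ring.
  - rewrite sr_Sl, IHm, sr_Sl. replace (S a + m)%nat with (a + S m)%nat by lia. ring.
Qed.
Lemma sr_le a m f g : (forall i, (a <= i < a + m)%nat -> f i <= g i) -> sr a m f <= sr a m g.
Proof.
  revert a; induction m; intros a H.
  - rewrite !sr_0; lra.
  - rewrite !sr_Sl. apply Rplus_le_compat. apply H; lia. apply IHm; intros; apply H; lia.
Qed.
Lemma sr_plus a m f g : sr a m (fun i => f i + g i) = sr a m f + sr a m g.
Proof. revert a; induction m; intro a. rewrite !sr_0; ring. rewrite !sr_Sl, IHm; ring. Qed.
Lemma sr_scal a m c f : sr a m (fun i => c * f i) = c * sr a m f.
Proof. revert a; induction m; intro a. rewrite !sr_0; ring. rewrite !sr_Sl, IHm; ring. Qed.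
Lemma sr_tele a m V : sr a m (fun i => V i - V (S i)) = V a - V (a + m)%nat.
Proof. revert a; induction m; intro a. rewrite sr_0, Nat.add_0_r; ring.
  rewrite sr_Sl, IHm. replace (S a + m)%nat with (a + S m)%nat by lia. ring. Qed.
Lemma sr_const a m c : sr a m (fun _ => c) = INR m * c.
Proof. revert a; induction m; intro a. rewrite sr_0; simpl; ring. rewrite sr_Sl, IHm, S_INR; ring. Qed.
Lemma sr_nonneg a m f : (forall i, (a <= i < a + m)%nat -> 0 <= f i) -> 0 <= sr a m f.
Proof. intro H. rewrite <- (Rmult_0_r (INR m)), <- sr_const with (a:=a). apply sr_le. exact H. Qed.

Lemma sum_ft_sr a b f : sum_ft a b f = sr a (S b - a) f. Proof. reflexivity. Qed.
Lemma sum_lt_sr m f : sum_lt m f = sr 0 m f. Proof. reflexivity. Qed.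

Lemma sum_ft0 M f : sum_ft 0 M f = sum_f_R0 f M.
Proof. rewrite sum_ft_sr. replace (S M - 0)%nat with (S M) by lia.
  induction M. unfold sr; simpl; ring. rewrite sr_Sr, IHM. simpl. reflexivity. Qed.

Lemma le_by_frac L R N D : 0 <= N -> 0 < D -> R - L = N / D -> L <= R.
Proof. intros HN HD E. assert (0 <= N / D) by (unfold Rdiv; apply Rmult_le_pos; [lra| left; apply Rinv_0_lt_compat; lra]). lra. Qed.

Lemma bernoulli t n : -1 <= t -> 1 + INR n * t <= (1+t)^n.
Proof. intro Ht. induction n. simpl; lra. rewrite S_INR; simpl.
  assert (0 <= INR n) by apply pos_INR. nra. Qed.

Lemma pow_diff s t m : 0 <= t <= s -> INR (S m) * t^m * (s - t) <= s^(S m) - t^(S m).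
Proof. intro H. induction m. simpl; lra.
  repeat rewrite S_INR in *. change (s^(S (S m))) with (s * s^(S m)). change (t^(S (S m))) with (t * t^(S m)).
  change (t^(S m)) with (t * t^m) in *.
  assert (0 <= t^m) by (apply pow_le; lra). assert (0 <= INR m) by apply pos_INR.
  assert (X0 : 0 <= (INR m + 1) * t^m * (s - t)) by (apply Rmult_le_pos; [apply Rmult_le_pos|]; lra).
  assert (X1 : s * ((INR m + 1) * t^m * (s - t)) <= s * (s^(S m) - t*t^m)) by (apply Rmult_le_compat_l; lra).
  assert (X2 : t * ((INR m + 1) * t^m * (s - t)) <= s * ((INR m + 1) * t^m * (s - t))) by (apply Rmult_le_compat_r; lra).
  nra. Qed.

Lemma lemW y k : 1 <= y -> (y-1)^k * (y + INR k) <= y^(S k).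
Proof. intro Hy. induction k. simpl; lra.
  rewrite S_INR. change ((y-1)^(S k)) with ((y-1)*(y-1)^k). change (y^(S (S k))) with (y*y^(S k)).
  assert ((y-1)^(S k) <= y^(S k)) by (apply pow_incr; lra).
  change ((y-1)^(S k)) with ((y-1)*(y-1)^k) in H.
  assert (0 <= (y-1)^k) by (apply pow_le; lra). nra. Qed.

Lemma lemX x p : 0 <= x -> (x - INR p)*(x+1)^p <= x^(S p).
Proof. intro Hx. induction p. simpl; lra.
  rewrite S_INR. change ((x+1)^(S p)) with ((x+1)*(x+1)^p). change (x^(S (S p))) with (x*x^(S p)).
  assert (x^(S p) <= (x+1)^(S p)) by (apply pow_incr; lra).
  change ((x+1)^(S p)) with ((x+1)*(x+1)^p) in H. nra. Qed.

Lemma tele1 x p : 0 < x -> (1 <= p)%nat -> (1/x^p - 1/(x+1)^p)/INR p <= 1/x^(S p).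
Proof. intros Hx Hp. assert (HA : 0 < x^p) by (apply pow_lt; lra).
  assert (HB : 0 < (x+1)^p) by (apply pow_lt; lra).
  assert (HP : 0 < INR p) by (apply lt_0_INR; lia).
  pose proof (lemX x p ltac:(lra)) as K. change (x^(S p)) with (x*x^p) in *.
  apply le_by_frac with (N := x*x^p - (x - INR p)*(x+1)^p) (D := x*x^p*(x+1)^p*INR p).
  lra. apply Rmult_lt_0_compat; [apply Rmult_lt_0_compat|]; try apply Rmult_lt_0_compat; lra.
  field. repeat split; lra. Qed.

Lemma tele2 x k : 0 < x -> (2 <= k)%nat -> INR k * (INR k - 1) <= x + 1 ->
  1/(x^k*(x+1)) <= (1/x^k - 1/(x+1)^k)/(INR k - 1).
Proof. intros Hx Hk Hxk. assert (HA : 0 < x^k) by (apply pow_lt; lra).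
  assert (HB : 0 < (x+1)^k) by (apply pow_lt; lra).
  assert (HK : 2 <= INR k) by (replace 2 with (INR 2) by (simpl; lra); apply le_INR; lia).
  pose proof (lemW (x+1) k ltac:(lra)) as W. replace (x+1-1) with x in W by ring.
  change ((x+1)^(S k)) with ((x+1)*(x+1)^k) in W.
  assert (G : (x+1)*x^k <= (x+2-INR k)*(x+1)^k).
  { assert (0 < x + 1 + INR k) by lra.
    apply Rmult_le_reg_r with (x + 1 + INR k); auto.
    assert ((x+1)*(x+1) <= (x+2-INR k)*(x+1+INR k)) by nra.
    nra. }
  apply le_by_frac with (N := (x+2-INR k)*(x+1)^k - (x+1)*x^k) (D := x^k*(x+1)^k*(x+1)*(INR k - 1)).
  lra. repeat apply Rmult_lt_0_compat; lra.
  field. repeat split; lra. Qed.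

Lemma mono1 x k : 0 < x -> (1 <= k)%nat -> x^k*(x+1) <= x*(x+1)^k.
Proof. intros Hx Hk. destruct k. lia. change (x^(S k)) with (x*x^k). change ((x+1)^(S k)) with ((x+1)*(x+1)^k).
  assert (x^k <= (x+1)^k) by (apply pow_incr; lra). assert (0 <= x^k) by (apply pow_le; lra). nra. Qed.

Lemma rho_bound x k : (2 <= k)%nat -> INR k ^ 2 <= x -> ((x+1)/x)^k <= 1 + INR k^2/((INR k - 1)*x).
Proof. intros Hk Hx.
  assert (HK : 2 <= INR k) by (replace 2 with (INR 2) by (simpl; lra); apply le_INR; lia).
  assert (Hx0 : 4 <= x) by nra.
  set (a := 1/x). assert (Ha : 0 < a) by (unfold a; apply Rdiv_lt_0_compat; lra).
  assert (Hax : a * x = 1) by (unfold a; field; lra).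
  replace ((x+1)/x) with (1+a) by (unfold a; field; lra).
  assert (Hka : INR k * a * INR k <= 1).
  { apply Rmult_le_reg_r with x. lra. replace (INR k * a * INR k * x) with (INR k ^2 * (a*x)) by ring. rewrite Hax. lra. }
  assert (Ha1 : a <= 1/4) by nra.
  assert (E1 : (1+a)^k * (1-a)^k <= 1).
  { rewrite <- Rpow_mult_distr. apply Rle_trans with (1^k); [apply pow_incr|rewrite pow1; lra].
    split; nra. }
  assert (E2 : 1 + INR k * (-a) <= (1 + - a)^k) by (apply bernoulli; nra).
  replace (1 + - a) with (1 - a) in E2 by ring.
  assert (HB : 0 < (1+a)^k) by (apply pow_lt; lra).
  set (B := (1+a)^k) in *.
  replace (INR k ^ 2 / ((INR k - 1) * x)) with (INR k ^ 2 * a / (INR k - 1)) by (unfold a; field; lra).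
  set (c := INR k ^ 2 * a / (INR k - 1)).
  assert (Hc : c * (INR k - 1) = INR k ^2 * a) by (unfold c; field; lra).
  assert (Hc0 : 0 <= c) by (unfold c; unfold Rdiv; apply Rmult_le_pos; [nra| left; apply Rinv_0_lt_compat; lra]).
  assert (H1 : B * (1 - INR k * a) <= 1) by nra.
  assert (H2 : 1 <= (1 - INR k * a) * (1 + c)).
  { apply Rmult_le_reg_r with (INR k - 1). lra.
    replace ((1 - INR k*a)*(1+c)*(INR k -1)) with ((1-INR k*a)*(INR k-1) + (1 - INR k*a)*(c*(INR k-1))) by ring.
    rewrite Hc. assert (0 <= INR k * a * (1 - INR k * a * INR k)) by (apply Rmult_le_pos; nra). nra. }
  assert (H3 : 0 < 1 - INR k * a) by nra.
  apply Rmult_le_reg_r with (1 - INR k * a). exact H3. nra.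
Qed.

Lemma exp_partial y M : 0 <= y -> sum_f_R0 (fun i => /INR (Factorial.fact i) * y^i) M <= exp y.
Proof. intro Hy. unfold exp. destruct (exist_exp y) as [l Hl]. simpl. apply growing_ineq.
  - intro n. change (sum_f_R0 (fun i => / INR (Factorial.fact i) * y ^ i) (S n)) with (sum_f_R0 (fun i => / INR (Factorial.fact i) * y ^ i) n + / INR (Factorial.fact (S n)) * y ^ (S n)). assert (0 <= / INR (Factorial.fact (S n)) * (y ^ (S n))).
    { apply Rmult_le_pos. left; apply Rinv_0_lt_compat, INR_fact_lt_0. apply Rmult_le_pos; auto; apply pow_le; auto. }
    lra.
  - exact Hl.
Qed.

Lemma exp_pow y p : 0 < y -> exp (INR p * ln y) = y^p.
Proof. intro Hy. induction p. simpl. rewrite Rmult_0_l. apply exp_0.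
  rewrite S_INR, Rmult_plus_distr_r, exp_plus, IHp, Rmult_1_l, exp_ln; auto. simpl; ring. Qed.

Lemma ln_ge0 y : 1 <= y -> 0 <= ln y.
Proof. intro H. destruct (Req_dec y 1) as [E|E]. subst; rewrite ln_1; lra.
  left. rewrite <- ln_1. apply ln_increasing; lra. Qed.

Lemma ln_step n j : 0 < j -> 0 < n -> 1/(j+1) <= ln (n/j) - ln (n/(j+1)).
Proof. intros Hj Hn. unfold Rdiv at 2 3. rewrite !ln_mult, !ln_Rinv; try lra;
  try (apply Rinv_0_lt_compat; lra).
  set (z := ln (j+1) - ln j). replace (ln n + - ln j - (ln n + - ln (j+1))) with z by (unfold z; ring).
  pose proof (exp_ineq1_le (-z)) as H.
  assert (E : exp (-z) = j / (j+1)).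
  { unfold z. replace (- (ln (j+1) - ln j)) with (ln j + - ln (j+1)) by ring.
    rewrite exp_plus, exp_Ropp, !exp_ln; try lra. }
  rewrite E in H.
  assert (j/(j+1) = 1 - 1/(j+1)) by (field; lra). lra. Qed.

Definition ee (a t : R) (M : nat) := sum_ft 0 M (fun i => a ^ i / INR (Factorial.fact i) * t ^ i).
Definition PP (a t : R) (r : nat) := sum_lt r (fun r' => ee a t r').

Lemma ee_S a t M : ee a t (S M) = ee a t M + a^(S M) / INR (Factorial.fact (S M)) * t^(S M).
Proof. unfold ee. rewrite !sum_ft0. reflexivity. Qed.
Lemma ee_O a t : ee a t 0 = 1.
Proof. unfold ee. rewrite sum_ft0. simpl. field. Qed.

Lemma ee_nonneg a t M : 0 <= a -> 0 <= t -> 0 <= ee a t M.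
Proof. intros Ha Ht. induction M. rewrite ee_O; lra. rewrite ee_S.
  assert (0 <= a^(S M) / INR (Factorial.fact (S M)) * t^(S M)).
  { apply Rmult_le_pos. unfold Rdiv; apply Rmult_le_pos. apply pow_le; auto. left; apply Rinv_0_lt_compat, INR_fact_lt_0. apply pow_le; auto. }
  lra. Qed.

Lemma ee_zero a M : ee a 0 M = 1.
Proof. induction M. apply ee_O. rewrite ee_S, IHM. rewrite pow_i by lia. ring. Qed.

Lemma ee_exp a t M : 0 <= a -> 0 <= t -> ee a t M <= exp (a * t).
Proof. intros Ha Ht. unfold ee. rewrite sum_ft0.
  replace (sum_f_R0 (fun i => a ^ i / INR (Factorial.fact i) * t ^ i) M)
    with (sum_f_R0 (fun i => / INR (Factorial.fact i) * (a*t) ^ i) M).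
  apply exp_partial. apply Rmult_le_pos; auto.
  apply sum_eq. intros i _. rewrite Rpow_mult_distr. unfold Rdiv. ring. Qed.

Lemma ee_diff a s t M : 0 <= a -> 0 <= t <= s -> a*(s-t)*ee a t M <= ee a s (S M) - ee a t (S M).
Proof. intros Ha Hts. induction M.
  - rewrite !ee_S, !ee_O. simpl. field_simplify. lra.
  - rewrite (ee_S a s (S M)), (ee_S a t (S M)), (ee_S a t M).
    pose proof (pow_diff s t (S M) Hts) as PD.
    rewrite (ee_S a t M) in IHM. rewrite (fact_simpl (S M)), mult_INR.
    assert (HF : 0 < INR (Factorial.fact (S M))) by apply INR_fact_lt_0.
    assert (HS : 0 < INR (S (S M))) by (apply lt_0_INR; lia).
    set (F := INR (Factorial.fact (S M))) in *. set (N := INR (S (S M))) in *.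
    assert (Hx : a^(S (S M)) / (N * F) * s^(S (S M)) - a^(S (S M)) / (N * F) * t^(S (S M))
       = a * (a^(S M) / F) / N * (s^(S (S M)) - t^(S (S M)))) by (simpl; field; lra).
    assert (Hy : a * (s - t) * (a ^ S M / F * t ^ S M) = a * (a^(S M)/F) / N * (N * t^(S M) * (s - t))) by (field; lra).
    assert (0 <= a * (a^(S M)/F) / N).
    { unfold Rdiv. repeat apply Rmult_le_pos; auto; try apply pow_le; auto; left; apply Rinv_0_lt_compat; auto. }
    assert (a * (a^(S M)/F) / N * (N * t^(S M) * (s - t)) <= a * (a^(S M)/F) / N * (s^(S (S M)) - t^(S (S M))))
      by (apply Rmult_le_compat_l; auto).
    lra.
Qed.

Lemma PP_S a t r : PP a t (S r) = PP a t r + ee a t r.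
Proof. unfold PP. rewrite !sum_lt_sr, sr_Sr. reflexivity. Qed.
Lemma PP_O a t : PP a t 0 = 0. Proof. reflexivity. Qed.
Lemma PP_nonneg a t r : 0 <= a -> 0 <= t -> 0 <= PP a t r.
Proof. intros. induction r. rewrite PP_O; lra. rewrite PP_S. pose proof (ee_nonneg a t r H H0). lra. Qed.
Lemma PP_zero a r : PP a 0 r = INR r.
Proof. induction r. reflexivity. rewrite PP_S, IHr, ee_zero, S_INR. ring. Qed.
Lemma PP_exp a t r : 0 <= a -> 0 <= t -> PP a t r <= INR r * exp (a*t).
Proof. intros. induction r. rewrite PP_O; simpl; lra. rewrite PP_S, S_INR. pose proof (ee_exp a t r H H0). lra. Qed.
Lemma PP_diff a s t q : 0 <= a -> 0 <= t <= s -> a*(s-t)*PP a t q <= PP a s (S q) - PP a t (S q).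
Proof. intros Ha Hts. induction q.
  - rewrite !PP_S, !PP_O, !ee_O. lra.
  - rewrite (PP_S a s (S q)), (PP_S a t (S q)), (PP_S a t q).
    rewrite (PP_S a t q) in IHq. pose proof (ee_diff a s t q Ha Hts). lra.
Qed.

Lemma powdiv a b n : (a/b)^n = a^n / b^n.
Proof. unfold Rdiv. rewrite Rpow_mult_distr, pow_inv. reflexivity. Qed.

Definition Fq (k n l r : nat) : R :=
  INR r * (INR l - INR k) / ((INR k - 1) * INR n)
  - 1 / (INR k - 1) * ((INR l - INR k) / (INR n - INR k)) ^ k * PP (INR k - 1) (ln (INR n / INR l)) r
  - 3 * INR k ^ 2 * INR r / ((INR k - 1) * INR n).

Definition Hf (k n l q j : nat) : R :=
  ((INR l - INR k) / (INR j - INR k)) ^ k *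
  ((INR k - 1) / (INR j + 1) * Fq k n (S j) q + 1 / INR n).

Definition Wf (k n l q j : nat) : R :=
  let X := INR l - INR k in
  let u := (X / (INR n - INR k)) ^ k in
  let C := (INR q * INR k + 3 * INR k ^ 2 * INR q) / INR n * X ^ k
           + u * INR k ^ 2 * INR q * (INR n - INR k) ^ (k - 1) / (INR k - 1) in
  (1 + INR q) / INR n * X ^ k * (1 / ((INR k - 1) * (INR j - INR k) ^ (k - 1)))
  - C * (1 / ((INR k - 1) * (INR j - INR k) ^ k))
  - u / (INR k - 1) * PP (INR k - 1) (ln (INR n / INR j)) (S q).

Lemma INR_ge2 k : (2 <= k)%nat -> 2 <= INR k.
Proof. intro. replace 2 with (INR 2) by (simpl; lra). apply le_INR; lia. Qed.

Lemma div_ge1 a b : 0 < b -> b <= a -> 1 <= a/b.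
Proof. intros. replace (a/b) with (1 + (a-b)/b) by (field; lra).
  assert (0 <= (a-b)/b) by (unfold Rdiv; apply Rmult_le_pos; [lra|left; apply Rinv_0_lt_compat; lra]). lra. Qed.

Lemma term_bound k n l q j : (2 <= k)%nat -> (q < k)%nat -> (k * k + k <= l)%nat -> (l <= j)%nat -> (j < n)%nat ->
  Wf k n l q j - Wf k n l q (S j) <= Hf k n l q j.
Proof.
  intros Hk Hq Hl Hlj Hjn.
  assert (HK : 2 <= INR k) by (apply INR_ge2; auto).
  assert (HlR : INR k * INR k + INR k <= INR l) by (rewrite <- mult_INR, <- plus_INR; apply le_INR; auto).
  assert (HljR : INR l <= INR j) by (apply le_INR; auto).
  assert (HjnR : INR j + 1 <= INR n) by (rewrite <- S_INR; apply le_INR; lia).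
  assert (HqR : INR q + 1 <= INR k) by (rewrite <- S_INR; apply le_INR; lia).
  assert (Hq0 : 0 <= INR q) by apply pos_INR.
  unfold Wf, Hf, Fq. rewrite !S_INR.
  destruct k as [|p]; [lia|].
  replace (S p - 1)%nat with p by lia.
  assert (Hp1 : (1 <= p)%nat) by lia.
  set (kr := INR (S p)) in *. rewrite <- S_INR in HqR.
  assert (HpK : INR p = kr - 1) by (unfold kr; rewrite S_INR; ring).
  set (K1 := kr - 1) in *.
  set (nr := INR n) in *. set (X := INR l - kr) in *. set (jr := INR j) in *.
  set (D := nr - kr) in *. set (x := jr - kr) in *.
  replace (jr + 1 - kr) with (x + 1) by (unfold x; ring).
  assert (EK1 : K1 = kr - 1) by reflexivity. assert (EX : X = INR l - kr) by reflexivity.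
  assert (ED : D = nr - kr) by reflexivity. assert (Ex : x = jr - kr) by reflexivity.
  clearbody K1 X D x.
  set (Tj := ln (nr / jr)). set (Tj1 := ln (nr / (jr + 1))).
  set (PPq := PP K1 Tj1 q). set (PPj := PP K1 Tj (S q)). set (PPj1 := PP K1 Tj1 (S q)).
  assert (Hk4 : 4 <= kr * kr) by nra.
  assert (HX : kr * kr <= X) by lra.
  assert (Hx : X <= x) by lra.
  assert (HD : x + 1 <= D) by lra.
  assert (Hnr : 0 < nr) by lra.
  assert (HK1 : 1 <= K1) by lra.
  assert (Hx0 : 0 < x) by lra.
  assert (HX0 : 0 < X) by lra.
  assert (Hjr : 0 < jr) by lra.
  pose proof (tele1 x p Hx0 Hp1) as I1. rewrite HpK in I1.
  pose proof (tele2 x (S p) Hx0 Hk) as I2. fold kr in I2. specialize (I2 ltac:(nra)).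
  pose proof (ln_step nr jr Hjr Hnr) as I3. fold Tj Tj1 in I3.
  assert (HT1 : 0 <= Tj1) by (unfold Tj1; apply ln_ge0; apply div_ge1; lra).
  assert (HJ : 0 < jr + 1) by lra.
  assert (HJ1 : 0 < 1/(jr+1)) by (unfold Rdiv; rewrite Rmult_1_l; apply Rinv_0_lt_compat; lra).
  assert (I4 : K1 * (Tj - Tj1) * PPq <= PPj - PPj1) by (apply PP_diff; lra).
  pose proof (rho_bound x (S p) Hk ltac:(fold kr; nra)) as I5. fold kr in I5. rewrite powdiv in I5.
  assert (I7 : 0 <= PPq) by (apply PP_nonneg; lra).
  assert (I6 : PPq <= INR q * (D^p / (x+1)^p)).
  { apply Rle_trans with (INR q * exp (K1 * Tj1)). apply PP_exp; lra.
    apply Rmult_le_compat_l; auto. rewrite <- HpK. unfold Tj1. rewrite exp_pow.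
    rewrite <- powdiv. apply pow_incr. split.
    unfold Rdiv; apply Rmult_le_pos; [lra| left; apply Rinv_0_lt_compat; lra].
    apply Rmult_le_reg_r with ((jr+1)*(x+1)). nra.
    replace (nr / (jr + 1) * ((jr + 1) * (x + 1))) with (nr * (x+1)) by (field; lra).
    replace (D / (x + 1) * ((jr + 1) * (x + 1))) with (D * (jr+1)) by (field; lra).
    nra.
    unfold Rdiv; apply Rmult_lt_0_compat; [lra| apply Rinv_0_lt_compat; lra]. }
  assert (I8 : 1/(jr+1) <= 1/(x+1)).
  { unfold Rdiv. rewrite !Rmult_1_l. apply Rinv_le_contravar; lra. }
  pose proof (mono1 x (S p) Hx0 ltac:(lia)) as I9.
  rewrite !powdiv.
  set (XA := X^(S p)) in *. set (xA := x^(S p)) in *. set (x1A := (x+1)^(S p)) in *.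
  set (xp := x^p) in *. set (x1p := (x+1)^p) in *. set (Dk := D^(S p)). set (Dp := D^p) in *.
  assert (HxA : 0 < xA) by (apply pow_lt; lra). assert (Hx1A : 0 < x1A) by (apply pow_lt; lra).
  assert (Hxp : 0 < xp) by (apply pow_lt; lra). assert (Hx1p : 0 < x1p) by (apply pow_lt; lra).
  assert (HXA : 0 < XA) by (apply pow_lt; lra). assert (HDk : 0 < Dk) by (apply pow_lt; lra).
  assert (HDp : 0 < Dp) by (apply pow_lt; lra).
  assert (Ex1A : x1A = (x+1) * x1p) by reflexivity.
  assert (ExA : xA = x * xp) by reflexivity.
  rewrite <- EK1 in I2, I5.
  assert (HxK : 0 < K1 * x) by nra.
  set (c1 := (1 + INR q) / nr). set (c2 := (INR q * kr + 3 * kr ^ 2 * INR q) / nr).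
  set (u := XA / Dk). set (c3 := kr ^ 2 * INR q * Dp / K1). set (yy := PPq * (1/(jr+1))).
  assert (Hc1 : 0 <= c1) by (unfold c1, Rdiv; apply Rmult_le_pos; [lra|left; apply Rinv_0_lt_compat; lra]).
  assert (Hc2 : 0 <= c2) by (unfold c2, Rdiv; apply Rmult_le_pos; [nra|left; apply Rinv_0_lt_compat; lra]).
  assert (Hu : 0 <= u) by (unfold u, Rdiv; apply Rmult_le_pos; [lra|left; apply Rinv_0_lt_compat; lra]).
  assert (Hc3 : 0 <= c3) by (unfold c3, Rdiv; apply Rmult_le_pos; [apply Rmult_le_pos; [nra|lra]|left; apply Rinv_0_lt_compat; lra]).
  assert (Hyy : 0 <= yy) by (unfold yy; apply Rmult_le_pos; lra).
  assert (ERHS : XA / xA * (K1 / (jr + 1) * (INR q * (x + 1) / (K1 * nr) - 1 / K1 * (x1A / Dk) * PPq -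
    3 * kr ^ 2 * INR q / (K1 * nr)) + 1 / nr) = c1 * (XA / xA) - c2 * (XA * (1/xA * (1/(jr+1)))) - u * ((x1A / xA) * yy)).
  { replace (INR q * (x + 1)) with (INR q * (jr + 1 - kr)) by (rewrite Ex; ring).
    unfold c1, c2, u, yy. field. repeat split; lra. }
  rewrite ERHS.
  assert (Ia : c1 * XA * ((1/xp - 1/x1p)/K1) <= c1 * (XA / xA)).
  { replace (XA / xA) with (XA * (1/xA)) by (field; lra). rewrite Rmult_assoc. apply Rmult_le_compat_l; auto.
    apply Rmult_le_compat_l; lra. }
  assert (Ib : XA * (1/xA * (1/(jr+1))) <= XA * ((1/xA - 1/x1A)/K1)).
  { apply Rmult_le_compat_l; [lra|]. apply Rle_trans with (1/(xA*(x+1))); [|exact I2].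
    replace (1/(xA*(x+1))) with (1/xA * (1/(x+1))) by (field; lra).
    apply Rmult_le_compat_l; [|exact I8]. unfold Rdiv; rewrite Rmult_1_l; left; apply Rinv_0_lt_compat; lra. }
  assert (Ic1 : yy <= (PPj - PPj1)/K1).
  { apply Rle_trans with (PPq * (Tj - Tj1)). unfold yy; apply Rmult_le_compat_l; lra.
    apply Rmult_le_reg_l with K1. lra. replace (K1 * ((PPj - PPj1)/K1)) with (PPj - PPj1) by (field; lra). nra. }
  assert (Ic2 : kr^2/(K1*x) * yy <= c3 * ((1/xA - 1/x1A)/K1)).
  { assert (Hk2 : 0 <= kr^2/(K1*x)) by (unfold Rdiv; apply Rmult_le_pos; [nra|left; apply Rinv_0_lt_compat; lra]).
    apply Rle_trans with (kr^2/(K1*x) * (INR q * (Dp / x1p) * (1/(x+1)))).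
    { apply Rmult_le_compat_l; auto. unfold yy. apply Rmult_le_compat; lra. }
    replace (kr^2/(K1*x) * (INR q * (Dp / x1p) * (1/(x+1)))) with (c3 * (1/(x*x1A))) by (unfold c3; rewrite Ex1A; field; repeat split; lra).
    apply Rmult_le_compat_l; auto. apply Rle_trans with (1/(xA*(x+1))); [|exact I2].
    unfold Rdiv; rewrite !Rmult_1_l. apply Rinv_le_contravar; [apply Rmult_lt_0_compat; lra| exact I9]. }
  assert (Ic : (x1A/xA) * yy <= (PPj - PPj1)/K1 + c3 * ((1/xA - 1/x1A)/K1)).
  { apply Rle_trans with ((1 + kr^2/(K1*x)) * yy). apply Rmult_le_compat_r; auto. lra. }
  assert (Ic' : u * ((x1A/xA) * yy) <= u * ((PPj - PPj1)/K1 + c3 * ((1/xA - 1/x1A)/K1))) by (apply Rmult_le_compat_l; auto).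
  assert (Ib' : c2 * (XA * (1/xA * (1/(jr+1)))) <= c2 * (XA * ((1/xA - 1/x1A)/K1))) by (apply Rmult_le_compat_l; auto).
  assert (EL : c1 * XA * (1 / (K1 * xp)) -
 (c2 * XA + u * kr ^ 2 * INR q * Dp / K1) * (1 / (K1 * xA)) - u / K1 * PPj -
 (c1 * XA * (1 / (K1 * x1p)) - (c2 * XA + u * kr ^ 2 * INR q * Dp / K1) * (1 / (K1 * x1A)) - u / K1 * PPj1)
    = c1 * XA * ((1/xp - 1/x1p)/K1) - c2 * (XA * ((1/xA - 1/x1A)/K1)) - u * ((PPj - PPj1)/K1 + c3 * ((1/xA - 1/x1A)/K1))).
  { unfold c3. field. repeat split; lra. }
  rewrite EL. lra.
Qed.

Lemma core k n l q : (2 <= k)%nat -> (q < k)%nat -> (k * k + k <= l)%nat -> (l <= n)%nat ->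
  Fq k n l (S q) <= sr l (n - l) (Hf k n l q) + ((INR l - INR k)/(INR n - INR k))^k / INR n.
Proof.
  intros Hk Hq Hl Hln.
  assert (S1 : sr l (n - l) (fun j => Wf k n l q j - Wf k n l q (S j)) <= sr l (n - l) (Hf k n l q)).
  { apply sr_le. intros i Hi. apply term_bound; lia. }
  rewrite sr_tele in S1. replace (l + (n - l))%nat with n in S1 by lia.
  apply Rle_trans with (Wf k n l q l - Wf k n l q n + ((INR l - INR k)/(INR n - INR k))^k / INR n); [|lra].
  clear S1.
  assert (HK : 2 <= INR k) by (apply INR_ge2; auto).
  assert (HlR : INR k * INR k + INR k <= INR l) by (rewrite <- mult_INR, <- plus_INR; apply le_INR; auto).
  assert (HlnR : INR l <= INR n) by (apply le_INR; auto).
  assert (HqR : INR q + 1 <= INR k) by (rewrite <- S_INR; apply le_INR; lia).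
  assert (Hq0 : 0 <= INR q) by apply pos_INR.
  unfold Wf, Fq. rewrite S_INR.
  replace (INR n / INR n) with 1 by (field; nra). rewrite ln_1, PP_zero, S_INR.
  destruct k as [|p]; [lia|].
  replace (S p - 1)%nat with p by lia.
  set (kr := INR (S p)) in *. set (K1 := kr - 1) in *.
  set (nr := INR n) in *. set (X := INR l - kr) in *. set (D := nr - kr) in *.
  assert (EK1 : K1 = kr - 1) by reflexivity. assert (EX : X = INR l - kr) by reflexivity.
  assert (ED : D = nr - kr) by reflexivity. clearbody K1 X D.
  set (Pl := PP K1 (ln (nr / INR l)) (S q)).
  rewrite !powdiv.
  assert (HX : 0 < X) by nra. assert (HD : X <= D) by lra. assert (HD0 : 0 < D) by lra.
  assert (Hnr : 0 < nr) by nra. assert (HK1 : 1 <= K1) by lra.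
  assert (EXA : X ^ S p = X * X^p) by reflexivity. assert (EDk : D ^ S p = D * D^p) by reflexivity.
  set (XA := X ^ S p) in *. set (Xp := X ^ p) in *. set (Dk := D ^ S p) in *. set (Dp := D ^ p) in *.
  assert (HXp : 0 < Xp) by (apply pow_lt; lra). assert (HDp : 0 < Dp) by (apply pow_lt; lra).
  set (c2 := (INR q * kr + 3 * kr ^ 2 * INR q) / nr).
  set (u := XA / Dk).
  set (C := c2 * XA + u * kr ^ 2 * INR q * Dp / K1).
  assert (HXA : 0 < XA) by (rewrite EXA; nra). assert (HDk : 0 < Dk) by (rewrite EDk; nra).
  assert (Hu : 0 <= u) by (unfold u, Rdiv; apply Rmult_le_pos; [lra|left; apply Rinv_0_lt_compat; lra]).
  assert (Hc2 : 0 <= c2) by (unfold c2, Rdiv; apply Rmult_le_pos; [nra|left; apply Rinv_0_lt_compat; lra]).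
  assert (HC : 0 <= C).
  { unfold C. assert (0 <= u * kr ^ 2 * INR q * Dp / K1).
    { unfold Rdiv. apply Rmult_le_pos; [|left; apply Rinv_0_lt_compat; lra]. apply Rmult_le_pos; [apply Rmult_le_pos; [apply Rmult_le_pos; [lra| apply pow_le; lra] | lra] | lra]. }
    nra. }
  set (T1 := C / (K1 * Dk)). set (T2 := u * ((INR q + 1) * kr / (K1 * nr) + 1 / nr)).
  set (T3 := (3 * kr^2 - INR q * kr) / (K1 * nr) - kr^2 * INR q / (K1 * K1 * D)).
  assert (E : (1 + INR q) / nr * XA * (1 / (K1 * Xp)) - C * (1 / (K1 * XA)) - u / K1 * Pl -
    ((1 + INR q) / nr * XA * (1 / (K1 * Dp)) - C * (1 / (K1 * Dk)) - u / K1 * (INR q + 1)) + u / nr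
    - ((INR q + 1) * X / (K1 * nr) - 1 / K1 * u * Pl - 3 * kr ^ 2 * (INR q + 1) / (K1 * nr)) = T1 + T2 + T3).
  { unfold T1, T2, T3, C, c2, u. rewrite EXA, EDk. rewrite ED. field. repeat split; lra. }
  assert (H1 : 0 <= T1) by (unfold T1, Rdiv; apply Rmult_le_pos; [lra|left; apply Rinv_0_lt_compat; nra]).
  assert (H2 : 0 <= T2).
  { unfold T2. apply Rmult_le_pos; auto. unfold Rdiv. apply Rplus_le_le_0_compat; apply Rmult_le_pos; try nra;
    left; apply Rinv_0_lt_compat; nra. }
  assert (H3 : 0 <= T3).
  { unfold T3. apply le_by_frac with (N := (3 * kr^2 - INR q * kr) * K1 * D - kr^2 * INR q * nr) (D := K1 * K1 * nr * D).
    - assert (A1 : INR q * kr <= kr * kr - kr) by nra.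
      assert (A2 : (2 * kr * kr + kr) * D >= kr * kr * nr) by nra.
      assert (A3 : (3 * kr^2 - INR q * kr) * K1 * D >= (2*kr*kr + kr) * K1 * D).
      { apply Rmult_ge_compat_r. lra. apply Rmult_ge_compat_r; nra. }
      assert (A4 : kr^2 * INR q * nr <= kr * kr * K1 * nr).
      { replace (kr^2) with (kr*kr) by ring. apply Rmult_le_compat_r; [lra|]. apply Rmult_le_compat_l; nra. }
      nra.
    - repeat apply Rmult_lt_0_compat; lra.
    - field. repeat split; lra. }
  lra.
Qed.

Theorem mainTheorem9 (k n : nat) (c : R) (b : nat -> nat -> R)
  (hk : (2 <= k)%nat) (hc : 0 <= c)
  (hbn : forall r, (r <= k)%nat -> b (S n) r = 0)
  (hb0 : forall l, (k < l <= S n)%nat -> b l 0%nat = 0)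
  (hrec : forall l r, (k < l <= n)%nat -> (1 <= r <= k)%nat ->
     b l r = sum_ft l n (fun j =>
        ((INR l - INR k) / (INR j - INR k)) ^ k *
        ((INR k - 1) / (INR j + 1) * b (S j) (r - 1)%nat + c / INR n))) :
  forall l r, (k * k + k <= l <= n)%nat -> (r <= k)%nat ->
    b l r >=
    (INR r * (INR l - INR k) / ((INR k - 1) * INR n)
     - 1 / (INR k - 1) * ((INR l - INR k) / (INR n - INR k)) ^ k *
       sum_lt r (fun r' => sum_ft 0 r' (fun i =>
          (INR k - 1) ^ i / INR (Factorial.fact i) * (ln (INR n / INR l)) ^ i))
     - 3 * INR k ^ 2 * INR r / ((INR k - 1) * INR n)) * c.
Proof.
  assert (HK : 2 <= INR k) by (apply INR_ge2; auto).
  assert (Main : forall r, (r <= k)%nat -> forall l, (k*k+k <= l <= n)%nat -> b l r >= Fq k n l r * c).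
  { induction r as [|q IH]; intros Hr l Hl.
    - rewrite hb0 by nia. assert (Fq k n l 0 = 0) by (unfold Fq; rewrite PP_O; change (INR 0) with 0; unfold Rdiv; ring).
      rewrite H. lra.
    - rewrite hrec by nia. replace (S q - 1)%nat with q by lia.
      rewrite sum_ft_sr. replace (S n - l)%nat with (S (n - l)) by lia. rewrite sr_Sr.
      replace (l + (n - l))%nat with n by lia. rewrite hbn by lia.
      assert (HlR : INR k * INR k + INR k <= INR l) by (rewrite <- mult_INR, <- plus_INR; apply le_INR; lia).
      assert (Hk4 : 4 <= INR k * INR k) by nra.
      assert (S1 : sr l (n - l) (fun j => c * Hf k n l q j) <= sr l (n - l) (fun j =>
          ((INR l - INR k) / (INR j - INR k)) ^ k *
          ((INR k - 1) / (INR j + 1) * b (S j) q + c / INR n))).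
      { apply sr_le. intros j Hj. unfold Hf.
        assert (HjR : INR l <= INR j) by (apply le_INR; lia).
        pose proof (IH ltac:(lia) (S j) ltac:(lia)) as IHj.
        assert (Ha : 0 <= ((INR l - INR k) / (INR j - INR k)) ^ k).
        { apply pow_le. unfold Rdiv. apply Rmult_le_pos; [lra| left; apply Rinv_0_lt_compat; lra]. }
        assert (Hb : 0 <= (INR k - 1) / (INR j + 1)).
        { unfold Rdiv. apply Rmult_le_pos; [lra| left; apply Rinv_0_lt_compat; pose proof (pos_INR j); lra]. }
        set (a := ((INR l - INR k) / (INR j - INR k)) ^ k) in *.
        set (w := (INR k - 1) / (INR j + 1)) in *.
        assert (w * (Fq k n (S j) q * c) <= w * b (S j) q) by (apply Rmult_le_compat_l; lra).
        assert (a * (w * (Fq k n (S j) q * c) + c / INR n) <= a * (w * b (S j) q + c / INR n)) by (apply Rmult_le_compat_l; lra).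
        replace (c * (a * (w * Fq k n (S j) q + 1 / INR n))) with (a * (w * (Fq k n (S j) q * c) + c / INR n)).
        lra. unfold Rdiv. ring. }
      rewrite sr_scal in S1.
      pose proof (core k n l q hk ltac:(lia) ltac:(lia) ltac:(lia)) as Co.
      assert (Co' : Fq k n l (S q) * c <= (sr l (n - l) (Hf k n l q) + ((INR l - INR k) / (INR n - INR k)) ^ k / INR n) * c)
        by (apply Rmult_le_compat_r; lra).
      replace (((INR l - INR k) / (INR n - INR k)) ^ k * ((INR k - 1) / (INR n + 1) * 0 + c / INR n))
        with (((INR l - INR k) / (INR n - INR k)) ^ k / INR n * c) by (unfold Rdiv; ring).
      lra. }
  intros l r Hl Hr. exact (Main r Hr l Hl).
Qed.
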